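(* Let $G\le\operatorname{Aut}(T_\alpha)$ be a profinite branch group and $v$ a vertex of $T_\alpha$. Then $\mathrm{rist}_G(v)$ has finitely many orbits on $\partial T_\alpha^v$.
   Context: For $\alpha\in\mathbb{N}^{\mathbb{N}}$ with $\alpha(i)\ge2$ for all $i$, $T_\alpha$ is the spherically homogeneous rooted tree with root $r$ in which every vertex of level $n$ (distance $n$ from $r$) has $\alpha(n)$ children. For a vertex $v$, $T_\alpha^v$ is the subtree of vertices $w\ge v$ (lying below $v$ on a path from the root). The boundary $\partial T_\alpha$ is the set of infinite rays $(v_1,v_2,\dots)$ with $v_1=r$ and $v_{i+1}$ a child of $v_i$, with the topology generated by the sets of rays with a prescribed initial segment (a Cantor space); $\partial T_\alpha^v$ is the set of rays passing through $v$. For a closed $G\le\operatorname{Aut}(T_\alpha)$, $\mathrm{rist}_G(v)=\{g\in G: g(w)=w\text{ for all }w\notin T_\alpha^v\}$ and $\mathrm{rist}_G(n)$ is the subgroup generated by $\mathrm{rist}_G(v)$, $v$ of level $n$. $G$ is a profinite branch group if it is a closed subgroup of $\operatorname{Aut}(T_\alpha)$ (profinite topology) acting transitively on each level of $T_\alpha$ with $|G:\mathrm{rist}_G(n)|<\infty$ for every $n$. *)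

(* Defs.v *)
From mathcomp Require Import all_boot.
Set Implicit Arguments. Unset Strict Implicit. Unset Printing Implicit Defensive.

(* Vertices of T_alpha: the root is [::]; a vertex of level n is a sequence
   [:: x_0; ...; x_(n-1)] with x_i < alpha i (x_i = which child at level i). *)
Definition is_vertex (alpha : nat -> nat) (v : seq nat) : Prop :=
  forall i, i < size v -> nth 0 v i < alpha i.

Definition below (v w : seq nat) : Prop := take (size v) w = v.

Definition vmap := seq nat -> seq nat.

(* g agrees with h on all vertices of T_alpha (values off the tree are junk) *)
Definition agree (alpha : nat -> nat) (g h : vmap) : Prop :=
  forall v, is_vertex alpha v -> g v = h v.

Definition is_aut (alpha : nat -> nat) (g : vmap) : Prop :=
  (forall v, is_vertex alpha v -> is_vertex alpha (g v) /\ size (g v) = size v) /\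
  (forall v n, is_vertex alpha v -> g (take n v) = take n (g v)) /\
  (exists h : vmap, forall v, is_vertex alpha v ->
       is_vertex alpha (h v) /\ g (h v) = v /\ h (g v) = v).

Definition is_subgroup (alpha : nat -> nat) (G : vmap -> Prop) : Prop :=
  (forall g, G g -> is_aut alpha g) /\
  G id /\
  (forall g h, G g -> G h -> G (g \o h)) /\
  (forall g, G g -> exists h, G h /\ agree alpha (h \o g) id /\ agree alpha (g \o h) id).

(* Closed in the profinite (congruence) topology: an automorphism that agrees
   on every level with some element of G is (up to junk) in G. *)
Definition is_closed (alpha : nat -> nat) (G : vmap -> Prop) : Prop :=
  forall g, is_aut alpha g ->
    (forall n, exists h, G h /\
        forall v, is_vertex alpha v -> size v = n -> g v = h v) ->
    exists h, G h /\ agree alpha g h.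

Definition level_transitive (alpha : nat -> nat) (G : vmap -> Prop) : Prop :=
  forall u w, is_vertex alpha u -> is_vertex alpha w -> size u = size w ->
    exists g, G g /\ g u = w.

Definition rist (alpha : nat -> nat) (G : vmap -> Prop) (v : seq nat) (g : vmap) : Prop :=
  G g /\ forall w, is_vertex alpha w -> ~ below v w -> g w = w.

(* rist_G(n): subgroup generated by the rist_G(v), v of level n, i.e. finite
   products of such elements (each rist_G(v) is closed under inverses). *)
Definition rist_level (alpha : nat -> nat) (G : vmap -> Prop) (n : nat) (g : vmap) : Prop :=
  exists gs : seq vmap,
    (forall i, i < size gs -> exists v, is_vertex alpha v /\ size v = n /\
                                  rist alpha G v (nth id gs i)) /\
    agree alpha g (foldr (fun f acc => f \o acc) id gs).

(* |G : rist_G(n)| < oo : finitely many left cosets c * rist_G(n) cover G *)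
Definition finite_index_rist (alpha : nat -> nat) (G : vmap -> Prop) (n : nat) : Prop :=
  exists cs : seq vmap,
    (forall i, i < size cs -> G (nth id cs i)) /\
    forall g, G g -> exists i r, i < size cs /\ rist_level alpha G n r /\
                            agree alpha g (nth id cs i \o r).

Definition profinite_branch (alpha : nat -> nat) (G : vmap -> Prop) : Prop :=
  is_subgroup alpha G /\ is_closed alpha G /\ level_transitive alpha G /\
  forall n, finite_index_rist alpha G n.

(* Boundary: rays are sequences x with x i < alpha i; the vertex at level n
   on the ray is mkseq x n. *)
Definition is_ray (alpha : nat -> nat) (x : nat -> nat) : Prop := forall i, x i < alpha i.

Definition ray_through (v : seq nat) (x : nat -> nat) : Prop := mkseq x (size v) = v.

Definition act (g : vmap) (x : nat -> nat) : nat -> nat :=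
  fun i => nth 0 (g (mkseq x i.+1)) i.

(* Main.v *)
From Stdlib Require Import Classical ClassicalEpsilon.
Require Import Defs.
From mathcomp Require Import all_boot.
From mathcomp Require Import zify.
Set Implicit Arguments. Unset Strict Implicit.

Lemma vertex_take alpha w n : is_vertex alpha w -> is_vertex alpha (take n w).
Proof.
move=> hw i; rewrite size_take => hi.
have hin : i < n by move: hi; case: ifP => // h1 h2; apply: leq_trans h2 _; lia.
rewrite nth_take //; apply: hw; move: hi; case: ifP => // h1 h2; lia.
Qed.

Lemma vertex_mkseq alpha x L : is_ray alpha x -> is_vertex alpha (mkseq x L).
Proof. by move=> hx i; rewrite size_mkseq => hi; rewrite nth_mkseq. Qed.

Lemma take_mkseq' (x : nat -> nat) L L' : L <= L' -> take L (mkseq x L') = mkseq x L.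
Proof.
move=> hL; apply: (@eq_from_nth _ 0).
  by rewrite size_take !size_mkseq; case: ltnP => //; lia.
move=> i; rewrite size_take size_mkseq => hi.
have hi' : i < L by move: hi; case: ifP => //; lia.
rewrite nth_take // !nth_mkseq //; lia.
Qed.

Lemma size_take_le (T : Type) (s : seq T) n : n <= size s -> size (take n s) = n.
Proof. by rewrite size_take; case: ltnP => //; lia. Qed.

Lemma aut_size alpha g w : is_aut alpha g -> is_vertex alpha w -> size (g w) = size w.
Proof. by case=> h _ hw; case: (h w hw). Qed.
Lemma aut_vertex alpha g w : is_aut alpha g -> is_vertex alpha w -> is_vertex alpha (g w).
Proof. by case=> h _ hw; case: (h w hw). Qed.
Lemma aut_take alpha g w n : is_aut alpha g -> is_vertex alpha w -> g (take n w) = take n (g w).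
Proof. by case=> _ [h _] hw; apply: h. Qed.

Lemma ray_all alpha g z y : is_aut alpha g -> is_ray alpha z -> forall n,
  (forall L, n <= L -> g (mkseq z L) = mkseq y L) -> forall L, g (mkseq z L) = mkseq y L.
Proof.
move=> ha hz n h L.
have hm : L <= maxn L n by apply: leq_maxl.
rewrite -(@take_mkseq' z _ _ hm) (aut_take _ ha); last exact: vertex_mkseq.
by rewrite h ?leq_maxr // take_mkseq'.
Qed.

Lemma fixout_v alpha g v : is_aut alpha g -> is_vertex alpha v ->
  (forall w, is_vertex alpha w -> ~ below v w -> g w = w) -> g v = v.
Proof.
move=> ha hv hf; case: (eqVneq (g v) v) => // hne; exfalso.
have hv' := aut_vertex ha hv.
have hnb : ~ below v (g v).
  rewrite /below -{1}(aut_size ha hv) take_size => e; by rewrite e eqxx in hne.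
have e := hf _ hv' hnb.
case: ha => _ [_ [h hh]].
have [_ [_ e1]] := hh v hv.
have [_ [_ e2]] := hh _ hv'.
by move: e2; rewrite e e1 => e2; rewrite -e2 eqxx in hne.
Qed.

Lemma fixout_below alpha g v w : is_aut alpha g -> is_vertex alpha v ->
  (forall w, is_vertex alpha w -> ~ below v w -> g w = w) ->
  is_vertex alpha w -> below v w -> below v (g w).
Proof.
move=> ha hv hf hw hb; rewrite /below -(aut_take _ ha hw) hb.
exact: (fixout_v ha hv hf).
Qed.

Fixpoint verts (alpha : nat -> nat) (L : nat) : seq (seq nat) :=
  if L is L'.+1 then [seq rcons w i | w <- verts alpha L', i <- iota 0 (alpha L')]
  else [:: [::]].

Lemma vertsP alpha L w : (w \in verts alpha L) <-> (is_vertex alpha w /\ size w = L).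
Proof.
elim: L w => [|L IH] w /=.
  rewrite inE; split; first by move/eqP=> ->; split=> // i.
  by case=> _; case: w.
split.
  case/allpairsP=> [[u i]] /= [hu hi ->].
  have [hvu hsu] := (IH u).1 hu.
  rewrite size_rcons hsu; split=> // j; rewrite size_rcons nth_rcons => hj.
  case: (ltnP j (size u)) => hj'; first by apply: hvu.
  have e : j = size u by apply/eqP; rewrite eqn_leq hj' andbT -ltnS.
  rewrite e eqxx hsu; move: hi; rewrite mem_iota add0n; by case/andP.
case: w => [|a w'] [hw hs] //.
move: hw hs; case/lastP: (a :: w') => [|u x] hw hs; first by [].
apply/allpairsP; exists (u, x) => /=; split => //.
  apply/IH; split; last by move: hs; rewrite size_rcons; case.
  move=> i hi; have := hw i; rewrite size_rcons nth_rcons hi; apply; exact: ltnW.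
rewrite mem_iota /=; have := hw (size u); rewrite size_rcons nth_rcons ltnn eqxx.
move: hs; rewrite size_rcons; case=> <- h; rewrite ?add0n; apply: h; exact: ltnSn.
Qed.

Fixpoint all_seqs (k : nat) (W : seq (seq nat)) : seq (seq (seq nat)) :=
  if k is k'.+1 then [seq a :: s | a <- W, s <- all_seqs k' W] else [:: [::]].

Lemma all_seqsP (W : seq (seq nat)) (s : seq (seq nat)) :
  all (mem W) s -> s \in all_seqs (size s) W.
Proof.
elim: s => [|a s IH] /=; first by rewrite inE.
case/andP=> ha hs; apply/allpairsP; exists (a, s) => /=; split => //.
exact: IH.
Qed.

Lemma exists_max (X : eqType) (C : seq X) (P : X -> nat -> Prop) :
  (forall c M M', M <= M' -> P c M -> P c M') -> (forall c, exists M, P c M) ->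
  exists M, forall c, c \in C -> P c M.
Proof.
move=> hmon hex; elim: C => [|c C [M IH]]; first by exists 0.
have [Mc hc] := hex c.
exists (maxn M Mc) => c'; rewrite inE; case/orP.
  by move/eqP=> ->; apply: hmon hc; apply: leq_maxr.
by move=> hc'; apply: hmon (IH _ hc'); apply: leq_maxl.
Qed.

Definition good alpha (G : vmap -> Prop) (A : nat -> vmap -> Prop) L (f : vmap) :=
  forall M, exists h, G h /\ A M h /\
    forall w, is_vertex alpha w -> size w <= L -> h w = f w.

Lemma good_ext alpha G A L f :
  (forall g, G g -> is_aut alpha g) ->
  (forall M M' h, G h -> M <= M' -> A M' h -> A M h) ->
  good alpha G A L f ->
  exists f', good alpha G A L.+1 f' /\
     forall w, is_vertex alpha w -> size w <= L -> f' w = f w.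
Proof.
move=> hGa hmon hgood; apply: NNPP => hno.
pose W := verts alpha L.+1.
pose fc (c : seq (seq nat)) : vmap :=
  fun w => if size w <= L then f w else nth [::] c (index w W).
pose P c M := forall h, G h -> A M h ->
   ~ (forall w, is_vertex alpha w -> size w <= L.+1 -> h w = fc c w).
have hbad : forall c, exists M, P c M.
  move=> c; apply: NNPP => hc; apply: hno; exists (fc c); split; last first.
    by move=> w _ hw; rewrite /fc hw.
  move=> M; apply: NNPP => hM; apply: hc; exists M => h hG hA hag; apply: hM.
  by exists h.
have hPmon : forall c M M', M <= M' -> P c M -> P c M'.
  move=> c M M' hMM hP h hG hA; apply: hP => //; exact: (hmon _ _ _ hG hMM hA).
have [M hM] := exists_max (all_seqs (size W) W) hPmon hbad.
have [h [hG [hA hag]]] := hgood M.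
have hc : map h W \in all_seqs (size W) W.
  rewrite -(size_map h); apply: all_seqsP; apply/allP => x /mapP [w hw ->].
  have [hvw hsw] := (vertsP alpha L.+1 w).1 hw.
  apply/vertsP; split; first exact: aut_vertex (hGa _ hG) hvw.
  by rewrite (aut_size (hGa _ hG) hvw).
apply: (hM _ hc h hG hA) => w hw hs.
rewrite /fc; case: ifP => hsL; first exact: hag.
have hwW : w \in W by apply/vertsP; split=> //; apply/eqP; rewrite eqn_leq hs /= ltnNge hsL.
rewrite (nth_map [::]); last by rewrite index_mem.
by rewrite nth_index.
Qed.

Fixpoint dep_iter (T : Type) (P : nat -> T -> Prop) (R : nat -> T -> T -> Prop)
  (x0 : T) (p0 : P 0 x0)
  (ext : forall L x, P L x -> {y : T | P L.+1 y /\ R L x y}) (L : nat) : {x | P L x} :=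
  match L return {x | P L x} with
  | 0 => exist _ x0 p0
  | L'.+1 => let s := @dep_iter T P R x0 p0 ext L' in
             let e := ext L' (sval s) (svalP s) in
             exist _ (sval e) (proj1 (svalP e))
  end.

Lemma dep_iter_step T P R x0 p0 ext L :
  R L (sval (@dep_iter T P R x0 p0 ext L)) (sval (@dep_iter T P R x0 p0 ext L.+1)).
Proof. simpl; exact: (proj2 (svalP (ext L _ _))). Qed.

Lemma compact alpha (G : vmap -> Prop) (A : nat -> vmap -> Prop) :
  is_subgroup alpha G -> is_closed alpha G ->
  (forall M, exists h, G h /\ A M h) ->
  (forall M M' h, G h -> M <= M' -> A M' h -> A M h) ->
  (forall M h h', (forall w, is_vertex alpha w -> size w <= M -> h w = h' w) ->
      A M h -> A M h') ->
  exists g, G g /\ forall M, A M g.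
Proof.
move=> hsub hcl hne hmon hloc.
have hGa : forall g, G g -> is_aut alpha g by case: hsub.
have good0 : good alpha G A 0 id.
  move=> M; have [h [hG hA]] := hne M; exists h; split=> //; split=> // w hw.
  rewrite leqn0 => /eqP hs; have := aut_size (hGa _ hG) hw.
  by rewrite hs; case: w hs hw => // _ _; case: (h [::]).
pose R L (f f' : vmap) := forall w, is_vertex alpha w -> size w <= L -> f' w = f w.
have ext : forall L f, good alpha G A L f -> {f' | good alpha G A L.+1 f' /\ R L f f'}.
  move=> L f hf; apply: constructive_indefinite_description.
  exact: good_ext.
pose F := @dep_iter vmap (good alpha G A) R id good0 ext.
have Fagree : forall L L', L <= L' -> forall w, is_vertex alpha w -> size w <= L ->
     sval (F L') w = sval (F L) w.
  move=> L L' hLL'; elim: L' hLL' => [|L' IH] hle w hw hs.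
    by have -> : L = 0 by lia.
  case: (ltnP L L'.+1) => hlt; last by have -> : L = L'.+1 by lia.
  rewrite (@dep_iter_step _ _ R id good0 ext L' w hw); last by lia.
  by apply: IH => //; lia.
have hfun : forall L, {h | G h /\ A L h /\
    forall w, is_vertex alpha w -> size w <= L -> h w = sval (F L) w}.
  move=> L; apply: constructive_indefinite_description; exact: (svalP (F L)) L.
pose H L := sval (hfun L).
have HG : forall L, G (H L) by move=> L; case: (svalP (hfun L)).
have HA : forall L, A L (H L) by move=> L; case: (svalP (hfun L)) => _ [].
have HF : forall L w, is_vertex alpha w -> size w <= L -> H L w = sval (F L) w.
  by move=> L; case: (svalP (hfun L)) => _ [].
pose g : vmap := fun w => sval (F (size w)) w.
have gH : forall L w, is_vertex alpha w -> size w <= L -> g w = H L w.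
  by move=> L w hw hs; rewrite HF // /g (Fagree _ _ hs).
have hinv : forall L, {hi : vmap | forall v, is_vertex alpha v ->
       is_vertex alpha (hi v) /\ H L (hi v) = v /\ hi (H L v) = v}.
  by move=> L; apply: constructive_indefinite_description; case: (hGa _ (HG L)) => _ [].
pose I L := sval (hinv L).
have gaut : is_aut alpha g.
  split; [|split].
  - move=> w hw; rewrite (gH (size w)) //.
    by split; [exact: aut_vertex (hGa _ (HG _)) hw | exact: aut_size (hGa _ (HG _)) hw].
  - move=> w n hw; rewrite (gH (size w) (take n w)) //; last 2 first.
    + exact: vertex_take.
    + by rewrite size_take; case: ltnP => //; lia.
    by rewrite (aut_take _ (hGa _ (HG _)) hw) (gH (size w) w).
  - exists (fun w => I (size w) w) => w hw.
    have [hv1 [hv2 hv3]] := svalP (hinv (size w)) w hw.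
    have hsz : size (I (size w) w) = size w.
      by have := aut_size (hGa _ (HG (size w))) hv1; rewrite hv2 => e; exact: esym e.
    split; first exact: hv1.
    split; first by rewrite (gH (size w)) // hsz.
    rewrite (gH (size w) w hw (leqnn _)) (aut_size (hGa _ (HG _)) hw).
    exact: hv3.
have [g' [hG' hag']] := hcl g gaut (fun n => ex_intro _ (H n)
   (conj (HG n) (fun w hw hs => gH n w hw (eq_leq hs)))).
exists g'; split => // M; apply: (hloc M (H M)) (HA M) => w hw hs.
by rewrite -hag' // (gH M).
Qed.

Lemma reduce alpha G v (gs : seq vmap) :
  is_subgroup alpha G -> is_vertex alpha v ->
  (forall i, i < size gs -> exists u, is_vertex alpha u /\ size u = size v /\
       rist alpha G u (nth id gs i)) ->
  exists s, G s /\ (forall w, is_vertex alpha w -> ~ below v w -> s w = w) /\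
     forall w, is_vertex alpha w -> below v w ->
        foldr (fun f acc => f \o acc) id gs w = s w.
Proof.
move=> hsub hv; elim: gs => [|f gs IH] hgs.
  exists id; split; first by case: hsub => _ [].
  by split.
have [s [hGs [hfs hs]]] := IH (fun i hi => hgs i.+1 hi).
have [u [hu [hsu [hGf hff]]]] := hgs 0 (ltn0Sn _).
have hGa : is_aut alpha s by case: hsub => h _; apply: h.
case: (eqVneq u v) => huv.
- subst u; exists (f \o s); split; first by case: hsub => _ [_ [hc _]]; apply: hc.
  split.
    by move=> w hw hnb /=; rewrite hfs //; exact: hff.
  by move=> w hw hb /=; rewrite hs.
- exists s; split => //; split => // w hw hb /=.
  rewrite hs //; apply: hff; first exact: aut_vertex hGa hw.
  have e := fixout_below hGa hv hfs hw hb.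
  rewrite /below hsu e => e'; by rewrite e' eqxx in huv.
Qed.

Lemma seq_choice (X : Type) (d : X) m (P : nat -> X -> Prop) :
  (forall i, i < m -> exists x, P i x) ->
  exists s, size s = m /\ forall i, i < m -> P i (nth d s i).
Proof.
elim: m => [|m IH] h; first by exists [::].
have [s [hs hP]] := IH (fun i hi => h i (ltnW hi)).
have [x hx] := h m (ltnSn m).
exists (rcons s x); split; first by rewrite size_rcons hs.
move=> i hi; rewrite nth_rcons hs; case: ltnP => hl; first exact: hP.
have e : i = m by apply/eqP; rewrite eqn_leq hl andbT -ltnS.
by rewrite e eqxx.
Qed.
Unset Implicit Arguments.

Theorem lemmaA2 (alpha : nat -> nat) (halpha : forall i, 2 <= alpha i)
  (G : vmap -> Prop) (hG : profinite_branch alpha G)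
  (v : seq nat) (hv : is_vertex alpha v) :
  exists reps : seq (nat -> nat),
    (forall i, i < size reps ->
       is_ray alpha (nth (fun _ => 0) reps i) /\ ray_through v (nth (fun _ => 0) reps i)) /\
    (forall y, is_ray alpha y -> ray_through v y ->
       exists i g, i < size reps /\ rist alpha G v g /\
                   forall k, act g (nth (fun _ => 0) reps i) k = y k).
Proof.
move: hG => [hsub [hcl [htr hfi]]].
have hGa : forall g, G g -> is_aut alpha g by case: hsub.
pose x0 k := nth 0 v k.
have hx0 : is_ray alpha x0.
  move=> k; rewrite /x0; case: (ltnP k (size v)) => hk; first exact: hv.
  by rewrite nth_default //; exact: (leq_trans _ (halpha k)).
have hx0v : ray_through v x0 by rewrite /ray_through /x0 mkseq_nth.
have [cs [hcsG hcs]] := hfi (size v).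
have hrep : forall i, i < size cs -> exists z, is_ray alpha z /\ ray_through v z /\
   forall L w, is_vertex alpha w -> size v <= L -> nth id cs i w = mkseq x0 L ->
     take (size v) w = v -> w = mkseq z L.
  move=> i hi; have hc := hcsG i hi.
  have [_ [_ [_ hinv]]] := hsub.
  have [d [hd [hdc _]]] := hinv _ hc.
  have hda := hGa _ hd.
  pose z0 k := nth 0 (d (mkseq x0 k.+1)) k.
  have hz0 : forall L, mkseq z0 L = d (mkseq x0 L).
    move=> L; apply: (@eq_from_nth _ 0).
      by rewrite size_mkseq (aut_size hda (vertex_mkseq hx0)) size_mkseq.
    move=> k; rewrite size_mkseq => hk; rewrite nth_mkseq // /z0.
    have hkL : k.+1 <= L by [].
    rewrite -(take_mkseq' x0 hkL) (aut_take _ hda (vertex_mkseq hx0)) nth_take //.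
  have hz0r : is_ray alpha z0.
    move=> k; have hvk := aut_vertex hda (@vertex_mkseq _ _ k.+1 hx0).
    apply: hvk; by rewrite (aut_size hda (vertex_mkseq hx0)) size_mkseq.
  have key : forall L w, is_vertex alpha w -> nth id cs i w = mkseq x0 L -> w = mkseq z0 L.
    move=> L w hw e; rewrite hz0 -e; exact: esym (hdc w hw).
  case: (eqVneq (mkseq z0 (size v)) v) => hz.
  - by exists z0; split; [|split] => // L w hw hL hc' ht; exact: key.
  - exists x0; split; [|split] => // L w hw hL hc' ht; exfalso.
    have e := key _ _ hw hc'; rewrite e take_mkseq' // in ht.
    by rewrite ht eqxx in hz.
have [reps [hsz hreps]] := seq_choice (fun _ => 0) hrep.
exists reps; split.
  by move=> i hi; rewrite hsz in hi; have [? [? _]] := hreps i hi.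
move=> y hy hyv.
have [g [hGg hgA]] : exists g, G g /\ forall M, g (mkseq y M) = mkseq x0 M.
  apply: (compact (A := fun M h => h (mkseq y M) = mkseq x0 M) hsub hcl).
  - move=> M; apply: htr; [exact: vertex_mkseq | exact: vertex_mkseq | by rewrite !size_mkseq].
  - move=> M M' h hGh hMM hA /=.
    by rewrite -(take_mkseq' y hMM) (aut_take _ (hGa _ hGh) (vertex_mkseq hy)) hA take_mkseq'.
  - move=> M h h' hag hA /=.
    by rewrite -hA; apply: esym; apply: hag; [exact: vertex_mkseq | rewrite size_mkseq].
- have [i [r [hi [hr hag]]]] := hcs g hGg.
  have [gs [hgs hragr]] := hr.
  have [s [hGs [hfs hsF]]] := reduce hsub hv hgs.
  have hsa := hGa _ hGs.
  have hi' : i < size reps by rewrite hsz.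
  have [hzr [hzv hzP]] := hreps i hi.
  have hsy : forall L, size v <= L -> s (mkseq y L) = mkseq (nth (fun _ => 0) reps i) L.
    move=> L hL.
    have hyL := @vertex_mkseq _ _ L hy.
    have hb : below v (mkseq y L) by rewrite /below take_mkseq'.
    apply: hzP => //.
    + exact: aut_vertex hsa hyL.
    + rewrite -(hsF _ hyL hb) -hragr //; have := hag _ hyL; rewrite /= => <-; exact: hgA.
    + exact: fixout_below hsa hv hfs hyL hb.
  have [_ [_ [_ hinv]]] := hsub.
  have [t [ht [hts _]]] := hinv _ hGs.
  have hta := hGa _ ht.
  exists i, t; split => //; split.
    split => // w hw hnb.
    have e := hts w hw; by rewrite /= hfs in e.
  have hall : forall L, t (mkseq (nth (fun _ => 0) reps i) L) = mkseq y L.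
    apply: (ray_all (n := size v) hta hzr) => L hL.
    rewrite -hsy //; exact: (hts _ (@vertex_mkseq _ _ L hy)).
  by move=> k; rewrite /act hall nth_mkseq.
Qed.
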